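(* Let $\Gamma\in F(L)$ be homogeneous with $i$ letters $x$ and $j$ letters $y$, where $i+j$ is even and $i\le 3$. Then $\operatorname{div}(u_\Gamma)=0$.
   Context: $A=\mathbb{R}\langle x,y\rangle$; $L\subset A$ the free Lie algebra on $x,y$. $\operatorname{tr}$ is the projection $A\to A/\operatorname{span}\{ab-ba\}$. $F(L)$ is the quotient of $L\otimes L$ by the span of $a\otimes b-b\otimes a$ and $a\otimes[b,c]-[a,b]\otimes c$, regarded inside $A/\operatorname{span}\{ab-ba\}$ via $a\otimes b\mapsto\operatorname{tr}(ab)$. For $x_0\in\{x,y\}$, $\partial_{x_0}$ maps cyclic words by $\operatorname{tr}(a_1\cdots a_n)\mapsto\sum_{i:\,a_i=x_0}a_{i+1}\cdots a_n a_1\cdots a_{i-1}$. For $\Gamma\in F(L)$, $u_\Gamma$ is the derivation of $L$ with $u_\Gamma(x)=\partial_y\Gamma$, $u_\Gamma(y)=-\partial_x\Gamma$. For $l\in A$, $\partial^L_{x_0}(l)=\sum\partial^1\epsilon(\partial^2)$, where $\sum\partial^1\otimes\partial^2$ is the sum over occurrences of $x_0$ in monomials of (prefix)$\otimes$(suffix), and $\epsilon$ is the constant term. $\operatorname{div}(u)=\operatorname{tr}(\partial^L_x(u(x))+\partial^L_y(u(y)))$. *)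

(* Defs.v *)
From mathcomp Require Import all_boot all_algebra.
From mathcomp Require Import reals.
Set Implicit Arguments. Unset Strict Implicit. Unset Printing Implicit Defensive.
Import GRing.Theory Num.Theory.
Local Open Scope ring_scope.

Definition word := seq bool.
Definition lx : bool := false.
Definition ly : bool := true.

Section FreeAlg.
Variable R : realType.

(* Elements of R<x,y> as coefficient functions on words (Cauchy product);
   all objects in the statement are polynomial (finitely supported). *)
Definition A := word -> R.
Definition zeroA : A := fun _ => 0.
Definition addA (f g : A) : A := fun w => f w + g w.
Definition oppA (f : A) : A := fun w => - f w.
Definition subA (f g : A) : A := addA f (oppA g).
Definition scaleA (c : R) (f : A) : A := fun w => c * f w.
Definition mulA (f g : A) : A :=
  fun w => \sum_(k < (size w).+1) f (take k w) * g (drop k w).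
Definition monA (u : word) : A := fun w => (w == u)%:R.
Definition xA : A := monA [:: lx].
Definition yA : A := monA [:: ly].
Definition brA (a b : A) : A := subA (mulA a b) (mulA b a).
Definition sumA (n : nat) (f : nat -> A) : A := fun w => \sum_(k < n) f k w.

Definition is_poly (f : A) : Prop :=
  exists n, forall w : word, (n <= size w)%N -> f w = 0.

(* The free Lie algebra L: the smallest subspace of A containing x, y and
   closed under the commutator bracket. *)
Inductive inL : A -> Prop :=
| inL_x : inL xA
| inL_y : inL yA
| inL_zero : inL zeroA
| inL_add a b : inL a -> inL b -> inL (addA a b)
| inL_scale c a : inL a -> inL (scaleA c a)
| inL_br a b : inL a -> inL b -> inL (brA a b).

(* span{ab - ba : a, b in A}; tr p = tr q  iff  comm_span (p - q). *)
Inductive comm_span : A -> Prop :=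
| cs_zero : comm_span zeroA
| cs_comm a b : is_poly a -> is_poly b -> comm_span (brA a b)
| cs_add p q : comm_span p -> comm_span q -> comm_span (addA p q)
| cs_scale c p : comm_span p -> comm_span (scaleA c p).

(* tr G lies in F(L) = span{ tr(ab) : a, b in L } *)
Definition inFL (G : A) : Prop :=
  exists n (a b : nat -> A),
    (forall k, (k < n)%N -> inL (a k) /\ inL (b k)) /\
    comm_span (subA G (sumA n (fun k => mulA (a k) (b k)))).

Definition homogeneous (G : A) (i j : nat) : Prop :=
  forall w : word, G w != 0 ->
    count (pred1 lx) w = i /\ count (pred1 ly) w = j.

(* cyclic derivative on a monomial a_1...a_n:
   sum_{k : a_k = x0} a_{k+1}...a_n a_1...a_{k-1} *)
Definition dcyc_mon (x0 : bool) (w : word) : A :=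
  sumA (size w) (fun k => if nth lx w k == x0
                          then monA (drop k.+1 w ++ take k w) else zeroA).
(* linear extension (only words of length |v|+1 contribute to v) *)
Definition dcyc (x0 : bool) (G : A) : A :=
  fun v => \sum_(t : (size v).+1.-tuple bool) G t * dcyc_mon x0 t v.

(* d^L_{x0} on a monomial: sum over occurrences of prefix * eps(suffix) *)
Definition dL_mon (x0 : bool) (w : word) : A :=
  sumA (size w) (fun k => if nth lx w k == x0
                          then scaleA ((drop k.+1 w == [::])%:R) (monA (take k w))
                          else zeroA).
Definition dL (x0 : bool) (l : A) : A :=
  fun v => \sum_(t : (size v).+1.-tuple bool) l t * dL_mon x0 t v.

(* u_Gamma given by its values (u(x), u(y)) = (d_y Gamma, - d_x Gamma) *)
Definition u_Gamma (G : A) : A * A := (dcyc ly G, oppA (dcyc lx G)).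

(* div(u) = tr(d^L_x(u(x)) + d^L_y(u(y))); we return the argument of tr *)
Definition divA (u : A * A) : A := addA (dL lx u.1) (dL ly u.2).

End FreeAlg.

(* Main.v *)
Require Import Defs.
From Stdlib Require Import FunctionalExtensionality.
From mathcomp Require Import all_boot all_algebra.
From mathcomp Require Import reals zify.
Import Defs.
Set Implicit Arguments. Unset Strict Implicit. Unset Printing Implicit Defensive.
Import GRing.Theory Num.Theory.
Local Open Scope ring_scope.

Section Aux.
Variable R : realType.
Implicit Types f g a b G : A R.

Definition K (f : A R) (v : word) : R := \sum_(k < size v) f (rot k v).

Lemma shift_sum n (F : nat -> R) : F n = F 0%N -> \sum_(k < n) F k.+1 = \sum_(k < n) F k.
Proof.
case: n => [|n] H; first by rewrite !big_ord0.
by rewrite big_ord_recr big_ord_recl /= H addrC.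
Qed.

Lemma K_rot1 f v : K f (rot 1 v) = K f v.
Proof.
rewrite /K size_rot.
transitivity (\sum_(k < size v) f (rot k.+1 v)).
  apply: eq_bigr => k _; have hk := ltn_ord k; rewrite -[k.+1]addn1 rotD //; lia.
by apply: (@shift_sum (size v) (fun k => f (rot k v))); rewrite /= rot_size rot0.
Qed.

Lemma K_rot f m v : K f (rot m v) = K f v.
Proof.
elim: m => [|m IH]; first by rewrite rot0.
case: (leqP m.+1 (size v)) => H.
  by rewrite -addn1 addnC rotD ?addn1 // K_rot1 IH.
by rewrite rot_oversize // ltnW.
Qed.

Lemma K_rotr f v : \sum_(k < size v) f (rotr k v) = K f v.
Proof.
rewrite /rotr (reindex_inj rev_ord_inj) /=.
transitivity (\sum_(k < size v) f (rot k.+1 v)).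
  apply: eq_bigr => k _; congr (f (rot _ v)).
  have := ltn_ord k; lia.
by apply: (@shift_sum (size v) (fun k => f (rot k v))); rewrite /= rot_size rot0.
Qed.


Lemma mulA_K f g v :
  K (mulA f g) v = \sum_(m < (size v).+1) K (fun w => f (take m w) * g (drop m w)) v.
Proof.
rewrite /K /mulA exchange_big /=; apply: eq_bigr => k _.
rewrite size_rot; apply: eq_bigr => m _ //.
Qed.

Lemma K_mulC f g v : K (mulA f g) v = K (mulA g f) v.
Proof.
rewrite !mulA_K.
set n := size v.
transitivity (\sum_(m < n.+1) K (fun w => g (take (n - m) w) * f (drop (n - m) w)) v).
  apply: eq_bigr => m _.
  have hm : (m <= n)%N by rewrite -ltnS ltn_ord.
  rewrite -[RHS](K_rot _ m v) /K size_rot; apply: eq_bigr => k _.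
  rewrite rot_rot; set w := rot k v.
  have hs : size (drop m w) = (n - m)%N by rewrite size_drop size_rot.
  by rewrite /(rot m w) take_size_cat // drop_size_cat // mulrC.
rewrite (reindex_inj rev_ord_inj) /=; apply: eq_bigr => m _.
by rewrite subSS subKn // -ltnS ltn_ord.
Qed.

Lemma K_add f g v : K (addA f g) v = K f v + K g v.
Proof. by rewrite /K /addA big_split. Qed.
Lemma K_opp f v : K (oppA f) v = - K f v.
Proof. by rewrite /K /oppA sumrN. Qed.
Lemma K_scale c f v : K (scaleA c f) v = c * K f v.
Proof. by rewrite /K /scaleA mulr_sumr. Qed.
Lemma K_sumA n (F : nat -> A R) v : K (sumA n F) v = \sum_(k < n) K (F k) v.
Proof. by rewrite /K /sumA exchange_big. Qed.

Lemma K_comm c : comm_span c -> forall v, K c v = 0.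
Proof.
elim => [|a b _ _|p q _ Hp _ Hq|c' p _ Hp] v.
- by rewrite /K /zeroA big1.
- by rewrite /brA /subA K_add K_opp K_mulC subrr.
- by rewrite K_add Hp Hq addr0.
- by rewrite K_scale Hp mulr0.
Qed.


Lemma mulA_rev f g u :
  mulA f g (rev u) = \sum_(m < (size u).+1) f (rev (drop m u)) * g (rev (take m u)).
Proof.
rewrite /mulA size_rev (reindex_inj rev_ord_inj) /=; apply: eq_bigr => m _.
have hm : (m <= size u)%N by rewrite -ltnS ltn_ord.
by rewrite subSS take_rev drop_rev subKn.
Qed.

Lemma sign_split (m : nat) (u : word) :
  (-1) ^+ (size (drop m u)).+1 * (-1) ^+ (size (take m u)).+1 = (-1) ^+ (size u) :> R.
Proof.
rewrite !exprS mulrCA !mulrA mulrNN mulr1 mul1r -exprD addnC.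
by rewrite -size_cat cat_take_drop.
Qed.

Lemma inL_rev a : inL a -> forall u, a (rev u) = (-1) ^+ (size u).+1 * a u.
Proof.
elim => [| | |a' b' _ Ha _ Hb|c a' _ Ha|a' b' La Ha Lb Hb] u.
- rewrite /xA /monA; case: (eqVneq u [:: lx]) => [->|ne]; first by rewrite /= expr2 mulrNN mulr1 mul1r.
  have ne' : rev u != [:: lx] by apply: contra ne => /eqP h; rewrite -(revK u) h.
  by rewrite (negbTE ne') mulr0.
- rewrite /yA /monA; case: (eqVneq u [:: ly]) => [->|ne]; first by rewrite /= expr2 mulrNN mulr1 mul1r.
  have ne' : rev u != [:: ly] by apply: contra ne => /eqP h; rewrite -(revK u) h.
  by rewrite (negbTE ne') mulr0.
- by rewrite /zeroA mulr0.
- by rewrite /addA Ha Hb mulrDr.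
- by rewrite /scaleA Ha mulrCA.
- have HM : forall (f g : A R), (forall w, f (rev w) = (-1) ^+ (size w).+1 * f w) ->
     (forall w, g (rev w) = (-1) ^+ (size w).+1 * g w) ->
     mulA f g (rev u) = (-1) ^+ (size u) * mulA g f u.
    move=> f g Hf Hg; rewrite mulA_rev /mulA mulr_sumr; apply: eq_bigr => m _.
    by rewrite Hf Hg mulrACA sign_split [f _ * _]mulrC.
  rewrite /brA /subA /addA /oppA (HM _ _ Ha Hb) (HM _ _ Hb Ha).
  by rewrite exprS mulN1r mulNr -mulrN opprB mulrBr.
Qed.

Lemma mulA_rev_lie a b : inL a -> inL b -> forall w,
  mulA a b (rev w) = (-1) ^+ (size w) * mulA b a w.
Proof.
move=> La Lb w; rewrite mulA_rev /mulA mulr_sumr; apply: eq_bigr => m _.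
by rewrite (inL_rev La) (inL_rev Lb) mulrACA sign_split [a _ * _]mulrC.
Qed.

Lemma K_rev_lie a b : inL a -> inL b -> forall z,
  K (mulA a b) (rev z) = (-1) ^+ (size z) * K (mulA a b) z.
Proof.
move=> La Lb z; rewrite [in RHS]K_mulC -[in RHS]K_rotr /K size_rev mulr_sumr.
apply: eq_bigr => k _.
by rewrite -rev_rotr mulA_rev_lie // size_rotr.
Qed.

Lemma K_rev_FL G : inFL G -> forall z, K G (rev z) = (-1) ^+ (size z) * K G z.
Proof.
case=> n [a [b [Hab Hc]]] z.
have E : forall v, K G v = K (sumA n (fun k => mulA (a k) (b k))) v.
  move=> v; have := K_comm Hc v; rewrite /subA K_add K_opp => /eqP.
  by rewrite subr_eq0 => /eqP.
rewrite !E !K_sumA mulr_sumr; apply: eq_bigr => k _.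
by have [La Lb] := Hab k (ltn_ord k); rewrite K_rev_lie.
Qed.


Lemma sum_tuple_eq N (F : word -> R) (s : word) :
  \sum_(t : N.-tuple bool) F t * (s == t :> word)%:R = if size s == N then F s else 0.
Proof.
case: eqP => hs.
  have hsb : size s == N by apply/eqP.
  rewrite (bigD1 (Tuple hsb)) //= eqxx mulr1 big1 ?addr0 // => t ne.
  suff -> : (s == t :> word) = false by rewrite mulr0.
  apply/negbTE; apply: contra ne => /eqP e; apply/eqP/val_inj => /=; by rewrite e.
rewrite big1 // => t _.
suff -> : (s == t :> word) = false by rewrite mulr0.
by apply/negbTE/eqP => e; apply: hs; rewrite e size_tuple.
Qed.

Lemma dL_monE (b : bool) (t v : word) : size t = (size v).+1 ->
  dL_mon R b t v = (t == rcons v b :> word)%:R :> R.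
Proof.
move=> st; rewrite /dL_mon /sumA st big_ord_recr /= big1 ?add0r.
  rewrite drop_oversize ?st // eqxx.
  set c := nth lx t (size v); set p := take (size v) t.
  have Et : t = rcons p c by rewrite /p /c -take_nth ?st // take_oversize ?st.
  rewrite [in RHS]Et eqseq_rcons.
  by case: eqP => _ /=; rewrite ?andbT ?andbF /zeroA // /scaleA mul1r /monA eq_sym.
move=> k _; case: ifP => _ //; rewrite /scaleA.
suff -> : (drop k.+1 t == [::]) = false by rewrite mul0r.
apply/negbTE; rewrite -size_eq0 size_drop st; have := ltn_ord k; lia.
Qed.

Lemma dLE (b : bool) (l : A R) v : dL b l v = l (rcons v b).
Proof.
rewrite /dL (eq_bigr (fun t : (size v).+1.-tuple bool => l t * (rcons v b == t :> word)%:R)).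
  by rewrite sum_tuple_eq size_rcons eqxx.
by move=> t _; rewrite dL_monE ?size_tuple // eq_sym.
Qed.

Lemma cyc_claim (b : bool) (t t' : word) (k : nat) : size t' = (size t).+1 -> (k < size t')%N ->
  (nth lx t' k == b) && (t == drop k.+1 t' ++ take k t') = (t' == rotr k (b :: t)).
Proof.
move=> st hk.
have hkt : (k <= size t)%N by rewrite -ltnS -st.
have Erot : rotr k (b :: t) = drop (size t - k) t ++ b :: take (size t - k) t.
  by rewrite /rotr /= subSn.
case: (eqVneq t' (rotr k (b :: t))) => [->|ne].
  have hs : size (drop (size t - k) t) = k by rewrite size_drop subKn.
  rewrite Erot nth_cat hs ltnn subnn /= eqxx /=.
  rewrite drop_cat hs ltnNge leqnSn /= subSn // subnn /= drop0 take_cat hs ltnn subnn take0 cats0.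
  by rewrite cat_take_drop eqxx.
apply/negbTE; apply: contra ne => /andP [/eqP h1 /eqP h2]; apply/eqP.
have hs : size (drop k.+1 t') = (size t - k)%N by rewrite size_drop st subSS.
rewrite Erot -hs h2 drop_size_cat // take_size_cat // -h1 -drop_nth ?cat_take_drop //.
Qed.

Lemma dcycE (b : bool) G t : dcyc b G t = K G (b :: t).
Proof.
rewrite -K_rotr /dcyc /=.
transitivity (\sum_(t' : (size t).+1.-tuple bool) \sum_(k < (size t).+1)
   G t' * (rotr k (b :: t) == t' :> word)%:R).
  apply: eq_bigr => t' _; rewrite /dcyc_mon /sumA size_tuple mulr_sumr; apply: eq_bigr => k _.
  rewrite [rotr _ _ == _]eq_sym -cyc_claim ?size_tuple //.
  by case: ifP => _ //=; rewrite /zeroA.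
rewrite exchange_big /=; apply: eq_bigr => k _.
by rewrite sum_tuple_eq size_rotr /= eqxx.
Qed.


Lemma cs_ext f g : comm_span f -> f =1 g -> comm_span g.
Proof. by move=> H E; rewrite -(functional_extensionality _ _ E). Qed.

Lemma cs_sum (I : Type) (r : seq I) (P : pred I) (F : I -> A R) :
  (forall i, P i -> comm_span (F i)) -> comm_span (fun v => \sum_(i <- r | P i) F i v).
Proof.
move=> H; elim: r => [|x r IH].
  by apply: cs_ext (cs_zero R) _ => v; rewrite big_nil.
case Px: (P x).
  apply: cs_ext (cs_add (H x Px) IH) _ => v; by rewrite big_cons Px.
by apply: cs_ext IH _ => v; rewrite big_cons Px.
Qed.

Lemma cs_scal c f : comm_span f -> comm_span (fun v => c * f v).
Proof. exact: cs_scale. Qed.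

Lemma poly_mon u : is_poly (monA R u).
Proof.
exists (size u).+1 => w hw; rewrite /monA.
suff -> : (w == u) = false by [].
by apply/negbTE/eqP => e; move: hw; rewrite e ltnn.
Qed.

Lemma take_drop_eq (w a b : word) k : (k <= size w)%N ->
  ((take k w == a) && (drop k w == b)) = (k == size a) && (w == a ++ b).
Proof.
move=> hk; apply/andP/andP => [[/eqP h1 /eqP h2]|[/eqP h1 /eqP h2]].
  by rewrite -h1 -h2 cat_take_drop size_take_min (minn_idPl hk) eqxx.
by rewrite h2 h1 take_size_cat // drop_size_cat.
Qed.

Lemma sum_eq_nat n j (c : bool) :
  \sum_(k < n) ((k == j :> nat) && c)%:R = ((j < n)%N && c)%:R :> R.
Proof.
case: c; last by rewrite andbF big1 // => k _; rewrite andbF.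
rewrite andbT (eq_bigr (fun k : 'I_n => if (k == j :> nat) then 1 else 0)); last first.
  by move=> k _; rewrite andbT; case: (k == j :> nat).
by rewrite -big_mkcond /= (big_ord1_eq _ (fun _ => (1:R)) j n); case: (j < n)%N.
Qed.

Lemma mon_mul (a b : word) w : mulA (monA R a) (monA R b) w = monA R (a ++ b) w.
Proof.
rewrite /mulA /monA.
have E : forall k : 'I_(size w).+1, (take k w == a)%:R * (drop k w == b)%:R =
    ((k == size a :> nat) && (w == a ++ b))%:R :> R.
  move=> k; rewrite -take_drop_eq; last by rewrite -ltnS ltn_ord.
  by case: (take k w == a); case: (drop k w == b); rewrite /= ?mulr1 ?mulr0.
rewrite (eq_bigr _ (fun k _ => E k)) sum_eq_nat.
congr (_ %:R); case H: (w == a ++ b); rewrite ?andbT ?andbF //.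
by rewrite ltnS (eqP H) size_cat leq_addr.
Qed.

Lemma cs_mon_rot (t : word) m : comm_span (fun v => monA R t v - monA R (rot m t) v).
Proof.
apply: cs_ext (cs_comm (poly_mon (take m t)) (poly_mon (drop m t))) _ => v.
by rewrite /brA /subA /addA /oppA !mon_mul cat_take_drop.
Qed.

Lemma rotr_eq (v t : word) k : (v == rotr k t) = (rot k v == t).
Proof.
apply/eqP/eqP => [->|<-]; [exact: rotrK | by rewrite rotK].
Qed.

Lemma cs_of_K (F : A R) N : (forall v, (N <= size v)%N -> F v = 0) -> F [::] = 0 ->
  (forall v, K F v = 0) -> comm_span F.
Proof.
move=> HN H0 HK.
pose P m v := \sum_(t : m.-tuple bool) F t * monA R t v.
have HP : forall m v, P m v = if size v == m then F v else 0.
  by move=> m v; rewrite /P /monA sum_tuple_eq.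
apply: (@cs_ext (fun v => \sum_(m < N) P m v)).
  apply: cs_sum => -[[|m] hm] _.
    apply: cs_ext (cs_zero R) _ => v; rewrite HP /=.
    by case: v => //; rewrite H0.
  set n := m.+1.
  pose Q (t : word) v := (n%:R)^-1 * \sum_(k < n) (monA R t v - monA R (rotr k t) v).
  apply: (@cs_ext (fun v => \sum_(t : n.-tuple bool) F t * Q t v)).
    apply: cs_sum => t _; apply: cs_scal; apply: cs_scal; apply: cs_sum => k _.
    exact: cs_mon_rot.
  move=> v /=.
  have Z : \sum_(t : n.-tuple bool) F t * ((n%:R)^-1 * \sum_(k < n) monA R (rotr k t) v) = 0.
    transitivity ((n%:R)^-1 * \sum_(k < n) \sum_(t : n.-tuple bool) F t * (rot k v == t :> word)%:R).
      rewrite exchange_big mulr_sumr; apply: eq_bigr => t _.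
      rewrite mulrCA mulr_sumr; congr (_ * _); apply: eq_bigr => k _.
      by rewrite /monA rotr_eq mulrC.
    under eq_bigr => k _ do rewrite sum_tuple_eq size_rot.
    case: eqP => [hs|_]; last by rewrite big1 ?mulr0.
    by rewrite -hs -/(K F v) HK mulr0.
  rewrite /P.
  have -> : \sum_(t : n.-tuple bool) F t * Q t v = \sum_(t : n.-tuple bool) F t * Q t v +
     \sum_(t : n.-tuple bool) F t * ((n%:R)^-1 * \sum_(k < n) monA R (rotr k t) v).
    by rewrite Z addr0.
  rewrite -big_split; apply: eq_bigr => t _ /=.
  rewrite -mulrDr; congr (_ * _); rewrite /Q -mulrDr sumrB subrK sumr_const card_ord.
  by rewrite -(mulr_natl (monA R t v)) mulKf // pnatr_eq0.
move=> v /=; under eq_bigr => m _ do rewrite HP.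
case: (ltnP (size v) N) => hv.
  rewrite (bigD1 (Ordinal hv)) //= eqxx big1 ?addr0 // => k nk.
  suff -> : (size v == k) = false by [].
  by apply/negbTE; apply: contra nk => /eqP e; apply/eqP/val_inj.
rewrite HN // big1 // => k _.
suff -> : (size v == k) = false by [].
by apply/negbTE/eqP => e; move: (ltn_ord k); rewrite -e ltnNge hv.
Qed.

Lemma cnt_xy (z : word) : (count (pred1 lx) z + count (pred1 ly) z)%N = size z.
Proof. elim: z => [|c z IH] //=; case: c => /=; [by rewrite add0n add1n addnS IH | by rewrite add1n add0n addSn IH]. Qed.

Lemma count_rot' (p : pred bool) k (z : word) : count p (rot k z) = count p z.
Proof. by rewrite /rot count_cat addnC -count_cat cat_take_drop. Qed.

Lemma nseq_split (v : word) : count (pred1 lx) v = 0 -> v = nseq (size v) ly.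
Proof. elim: v => [|c v IH] //=; case: c => //= h; rewrite -IH //. Qed.

Lemma split_x (v : word) : (0 < count (pred1 lx) v)%N ->
  exists p r, v = nseq p ly ++ lx :: r /\ count (pred1 lx) r = (count (pred1 lx) v).-1.
Proof.
elim: v => [|c v IH] //=; case: c => /= h.
  have [p [r [-> E]]] := IH h; by exists p.+1, r.
by exists 0, v.
Qed.

Lemma rot_cat_size (u s : word) : rot (size u) (u ++ s) = s ++ u.
Proof. by rewrite /rot drop_size_cat // take_size_cat. Qed.

Lemma rev_rot_ex (v : word) : (count (pred1 lx) v <= 2)%N -> exists (a b : nat), rot a (rev v) = rot b v.
Proof.
case: (posnP (count (pred1 lx) v)) => [c0|cp] hc.
  by exists 0, 0; rewrite !rot0 (nseq_split c0) rev_nseq.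
have [p [r [Ev cr]]] := split_x cp.
case: (posnP (count (pred1 lx) r)) => [r0|rp].
  rewrite Ev (nseq_split r0); set q := size r.
  exists (size (nseq q ly)), (size (nseq p ly)).
  by rewrite rev_cat rev_cons !rev_nseq cat_rcons !rot_cat_size /= -!nseqD addnC.
have [q [r' [Er cr']]] := split_x rp.
have r'0 : count (pred1 lx) r' = 0.
  have E1 : count (pred1 lx) v = (count (pred1 lx) r).+1.
    by rewrite Ev count_cat count_nseq /= mul0n add0n add1n.
  have E2 : count (pred1 lx) r = (count (pred1 lx) r').+1.
    by rewrite Er count_cat count_nseq /= mul0n add0n add1n.
  move: hc; rewrite E1 E2; lia.
rewrite Ev Er (nseq_split r'0); set s := size r'.
exists (size (nseq s ly)), (size (nseq p ly)).
rewrite rev_cat rev_cons rev_cat rev_cons !rev_nseq cat_rcons cat_rcons.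
by rewrite -catA !rot_cat_size /= -!catA !cat_cons -!nseqD addnC.
Qed.

Lemma KG_hom G i j (z : word) : homogeneous G i j ->
  (count (pred1 lx) z != i) || (count (pred1 ly) z != j) -> K G z = 0.
Proof.
move=> H c; rewrite /K big1 // => k _.
case: (eqVneq (G (rot k z)) 0) => // ne.
have [h1 h2] := H _ ne; move: c; rewrite !count_rot' in h1 h2.
by rewrite h1 h2 !eqxx.
Qed.

Lemma count_cr (p : pred bool) (c d : bool) (v : word) :
  count p (c :: rcons v d) = (p c + count p v + p d)%N.
Proof. by rewrite /= -cats1 count_cat /= addn0 addnA. Qed.

End Aux.


Theorem mainTheorem16 (R : realType) (G : A R) (i j : nat) :
  inFL G -> homogeneous G i j -> ~~ odd (i + j) -> (i <= 3)%N ->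
  comm_span (divA (u_Gamma G)).
Proof.
move=> HFL Hh Hev Hi.
set F := divA (u_Gamma G).
have FE : forall v, F v = K G (ly :: rcons v lx) - K G (lx :: rcons v ly).
  by move=> v; rewrite /F /divA /u_Gamma /addA /= !dLE /oppA !dcycE.
have Kr := K_rev_FL HFL.
have Hz : forall v, ((count (pred1 lx) v).+1 != i) || ((count (pred1 ly) v).+1 != j) -> F v = 0.
  move=> v hv; rewrite FE !(KG_hom Hh) ?subr0 //; rewrite !count_cr /=;
  by rewrite ?add0n ?addn0 ?add1n ?addn1 // orbC.
apply: (@cs_of_K _ F (i + j)).
- move=> v hv; apply: Hz; rewrite -negb_and; apply/negP => /andP[/eqP e1 /eqP e2].
  move: hv; rewrite -(cnt_xy v) -e1 -e2; lia.
- by rewrite FE /= (_ : [:: ly; lx] = rot 1 [:: lx; ly]) // K_rot subrr.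
move=> v.
case: (boolP (((count (pred1 lx) v).+1 != i) || ((count (pred1 ly) v).+1 != j))) => hc.
  by rewrite /K big1 // => k _; apply: Hz; rewrite !count_rot'.
move: hc; rewrite negb_or !negbK => /andP[/eqP e1 /eqP e2].
have ev : ~~ odd (size v).
  by move: Hev; rewrite -(cnt_xy v) -e1 -e2 addSn addnS /= negbK.
have Frev : forall w, ~~ odd (size w) -> F (rev w) = - F w.
  move=> w hw; rewrite !FE.
  have E1 : ly :: rcons (rev w) lx = rev (lx :: rcons w ly) by rewrite rev_cons rev_rcons.
  have E2 : lx :: rcons (rev w) ly = rev (ly :: rcons w lx) by rewrite rev_cons rev_rcons.
  rewrite E1 E2 !Kr /= !size_rcons -signr_odd /= negbK (negbTE hw) expr0 !mul1r.
  by rewrite opprB.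
have Srev : K F (rev v) = - K F v.
  rewrite -[in RHS]K_rotr -sumrN /K size_rev; apply: eq_bigr => k _.
  by rewrite -rev_rotr Frev // size_rotr.
have [a [b Eab]] := rev_rot_ex (v := v) (ltac:(lia)).
have HH : K F v = - K F v by rewrite -Srev -(K_rot F a (rev v)) Eab K_rot.
move/eqP: HH; rewrite -subr_eq0 opprK -mulr2n mulrn_eq0 /= => /eqP //.
Qed.
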